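(* Let $(\mathcal V,\mathcal W,\lambda)$ be a FTvN system with $\mathcal V$ finite dimensional, and suppose the system is orbit-transitive. If $x\prec y$, then there exists a doubly stochastic transformation $D$, which is a convex combination of elements of $\operatorname{Aut}(\mathcal V,\mathcal W,\lambda)$, such that $x=Dy$.
   Context: A Fan-Theobald-von Neumann (FTvN) system is a triple $(\mathcal V,\mathcal W,\lambda)$ where $\mathcal V,\mathcal W$ are real inner product spaces and $\lambda:\mathcal V\to\mathcal W$ is a map such that: (A1) $\|\lambda(x)\|=\|x\|$ for all $x$; (A2) $\langle x,y\rangle\le\langle\lambda(x),\lambda(y)\rangle$ for all $x,y$; (A3) for every $c\in\mathcal V$ and $q\in\lambda(\mathcal V)$ there exists $x$ with $\lambda(x)=q$ and $\langle c,x\rangle=\langle\lambda(c),\lambda(x)\rangle$. $[u]=\{z:\lambda(z)=\lambda(u)\}$; $x\prec y$ iff $x\in\operatorname{conv}[y]$. A linear map $D$ is doubly stochastic if $Dx\prec x$ for all $x$. $\operatorname{Aut}(\mathcal V,\mathcal W,\lambda)$ is the set of invertible linear maps $A$ with $\lambda(Ax)=\lambda(x)$ for all $x$. The system is orbit-transitive if $\lambda(x)=\lambda(y)$ implies $y=Ax$ for some $A\in\operatorname{Aut}(\mathcal V,\mathcal W,\lambda)$. *)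

(* Defs.v *)
(* Real inner product spaces are modelled as lmodType R over an
   arbitrary R : realType, equipped with an explicit inner product. *)
From HB Require Import structures.
From mathcomp Require Import all_boot all_order all_algebra reals.
Set Implicit Arguments. Unset Strict Implicit. Unset Printing Implicit Defensive.
Import Order.TTheory GRing.Theory Num.Theory.
Local Open Scope ring_scope.

Section FTvN.
Variable R : realType.

Definition is_inner_product (V : lmodType R) (ip : V -> V -> R) : Prop :=
  [/\ (forall x y, ip x y = ip y x),
      (forall a x y z, ip (a *: x + y) z = a * ip x z + ip y z)
    & (forall x, x != 0 -> 0 < ip x x)].

Definition ipnorm (V : lmodType R) (ip : V -> V -> R) (x : V) : R :=
  Num.sqrt (ip x x).

Definition finite_dim (V : lmodType R) : Prop :=
  exists (n : nat) (b : 'I_n -> V),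
    forall v : V, exists c : 'I_n -> R, v = \sum_(i < n) c i *: b i.

Definition is_linear (V : lmodType R) (f : V -> V) : Prop :=
  forall (a : R) (x y : V), f (a *: x + y) = a *: f x + f y.

Definition FTvN_system (V W : lmodType R) (ipV : V -> V -> R) (ipW : W -> W -> R)
    (lam : V -> W) : Prop :=
  [/\ (forall x, ipnorm ipW (lam x) = ipnorm ipV x),
      (forall x y, ipV x y <= ipW (lam x) (lam y))
    & (forall (c : V) (q : W), (exists u, lam u = q) ->
         exists x, lam x = q /\ ipV c x = ipW (lam c) (lam x))].

Definition lam_class (V W : lmodType R) (lam : V -> W) (u : V) : V -> Prop :=
  fun z => lam z = lam u.

Definition in_conv (V : lmodType R) (S : V -> Prop) (x : V) : Prop :=
  exists (n : nat) (c : 'I_n -> R) (p : 'I_n -> V),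
    [/\ (forall i, 0 <= c i), \sum_(i < n) c i = 1, (forall i, S (p i))
      & x = \sum_(i < n) c i *: p i].

Definition majorized (V W : lmodType R) (lam : V -> W) (x y : V) : Prop :=
  in_conv (lam_class lam y) x.

Definition doubly_stochastic (V W : lmodType R) (lam : V -> W) (D : V -> V) : Prop :=
  is_linear D /\ forall x, majorized lam (D x) x.

Definition is_aut (V W : lmodType R) (lam : V -> W) (A : V -> V) : Prop :=
  [/\ is_linear A, bijective A & forall x, lam (A x) = lam x].

Definition orbit_transitive (V W : lmodType R) (lam : V -> W) : Prop :=
  forall x y, lam x = lam y -> exists A, is_aut lam A /\ y = A x.

Definition conv_comb_of_auts (V W : lmodType R) (lam : V -> W) (D : V -> V) : Prop :=
  exists (n : nat) (c : 'I_n -> R) (A : 'I_n -> V -> V),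
    [/\ (forall i, 0 <= c i), \sum_(i < n) c i = 1, (forall i, is_aut lam (A i))
      & forall v, D v = \sum_(i < n) c i *: A i v].

End FTvN.

(* Main.v *)
Require Import Defs.
From HB Require Import structures.
From mathcomp Require Import all_boot all_order all_algebra reals.
From mathcomp Require Import boolp.
Import Order.TTheory GRing.Theory Num.Theory.
Local Open Scope ring_scope.

Theorem corollary9p5 (R : realType) (V W : lmodType R)
    (ipV : V -> V -> R) (ipW : W -> W -> R) (lam : V -> W)
    (hipV : is_inner_product ipV) (hipW : is_inner_product ipW)
    (hsys : FTvN_system ipV ipW lam) (hfin : finite_dim V)
    (horb : orbit_transitive lam) (x y : V) (hxy : majorized lam x y) :
  exists D : V -> V,
    [/\ doubly_stochastic lam D, conv_comb_of_auts lam D & x = D y].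
Proof.
case: hxy => n [c [p [c0 c1 hp ->]]].
have [A hA] : exists A : 'I_n -> V -> V, forall i, is_aut lam (A i) /\ p i = A i y.
  have hex : forall i, exists B, is_aut lam B /\ p i = B y.
    by move=> i; apply: horb; rewrite (hp i).
  have [f hf] := choice hex.
  by exists f.
exists (fun v => \sum_(i < n) c i *: A i v); split.
- split.
  + move=> a u w.
    have -> : \sum_(i < n) c i *: A i (a *: u + w)
       = \sum_(i < n) (a *: (c i *: A i u) + c i *: A i w).
      apply: eq_bigr => i _; case: (hA i) => [[hl _ _] _].
      by rewrite hl scalerDr !scalerA mulrC.
    by rewrite big_split /= scaler_sumr.
  + move=> v; exists n, c, (fun i => A i v); split => //.
    by move=> i; case: (hA i) => [[_ _ h] _]; rewrite /lam_class h.
- exists n, c, A; split => //.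
  by move=> i; case: (hA i).
- by apply: eq_bigr => i _; case: (hA i) => _ ->.
Qed.
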